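(* Assume the rearrangement setting described in the context, and assume additionally that: - $X$ is convex in $R$; and - there is no walk in $R$ that starts in $M$ and ends in $Y$, and no walk in $R$ that starts in $Y$ and ends in $M$. If $R\in\mathfrak{T}_a$, then $S\in\mathfrak{T}_a$.
   Context: **Digraphs.** - A digraph $G$ is a pair $(V(G),A(G))$, where $V(G)$ is a finite non-empty set and $A(G)\subseteq V(G)\times V(G)$. Arcs are written $vw$. - $G^*$ is $G$ with all loops $vv$ removed. - Two vertices $u,w$ are adjacent if $uw\in A(G)$ or $wu\in A(G)$. $N_G(v)$ is the set of $w\ne v$ adjacent to $v$. - A walk is a sequence $v_0,\dots,v_I$ with $I\ge1$ and $v_{i-1}v_i\in A(G)$ for all $i$. It is closed if $v_0=v_I$. - A set $X$ is convex if every walk starting and ending in $X$ has all its vertices in $X$. - $\mathfrak{T}_a$ is the class of digraphs $G$ such that $G^*$ contains no closed walk; equivalently, every closed walk in $G$ is constant. **Rearrangement setting.** - $R=(Z,A(R))$ is a digraph. - $X,M\subseteq Z$ are disjoint. - $Y\subseteq Z$ satisfies $M\cap Y=\emptyset$ and $M\cap N_R(y)=\emptyset$ for all $y\in Y$. - $\beta:X\to Y$ is a map. - $S$ is the digraph with $V(S)=Z$ and $A(S)=A_r\cup A_d\cup A_u$, where: - $A_r=A(R)\setminus((M\times X)\cup(X\times M))$; - $A_d=\{m\beta(x): mx\in A(R)\cap(M\times X)\}$; - $A_u=\{\beta(x)m: xm\in A(R)\cap(X\times M)\}$. *)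

(* Defs.v *)
From mathcomp Require Import all_boot.
Set Implicit Arguments. Unset Strict Implicit. Unset Printing Implicit Defensive.

(* A digraph on a finite vertex set T is given by its arc relation
   e : rel T (e v w  <->  vw is an arc). *)

Definition noloops (T : finType) (e : rel T) : rel T :=
  fun v w => (v != w) && e v w.

(* A walk v_0, ..., v_I with I >= 1: start v0, remaining vertices p. *)
Definition walk (T : finType) (e : rel T) (v0 : T) (p : seq T) : bool :=
  (p != [::]) && path e v0 p.

Definition closed_walk (T : finType) (e : rel T) (v0 : T) (p : seq T) : bool :=
  walk e v0 p && (last v0 p == v0).

Definition convex (T : finType) (e : rel T) (X : {set T}) : Prop :=
  forall v0 p, walk e v0 p -> v0 \in X -> last v0 p \in X ->
    all (fun v => v \in X) (v0 :: p).

Definition in_Ta (T : finType) (e : rel T) : Prop :=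
  forall v0 p, ~~ closed_walk (noloops e) v0 p.

Definition adjacent (T : finType) (e : rel T) (u w : T) : bool :=
  e u w || e w u.

Definition nbhd (T : finType) (e : rel T) (v : T) : {set T} :=
  [set w | (w != v) && adjacent e v w].

Definition rearr (T : finType) (R : rel T) (X M : {set T}) (beta : T -> T) : rel T :=
  fun u v =>
    (R u v && ~~ (((u \in M) && (v \in X)) || ((u \in X) && (v \in M))))
    || ((u \in M) && [exists x, (x \in X) && R u x && (v == beta x)])
    || ((v \in M) && [exists x, (x \in X) && R x v && (u == beta x)]).

(* Main.v *)
Require Import Defs.
From mathcomp Require Import all_boot.

Section L.
Variables (T : finType) (R : rel T) (X M Y : {set T}) (beta : T -> T).
Hypotheses (dXM : [disjoint X & M]) (dMY : [disjoint M & Y])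
  (hb : forall x, x \in X -> beta x \in Y) (cX : convex R X)
  (nMY : forall v0 p, walk R v0 p -> v0 \in M -> last v0 p \notin Y)
  (nYM : forall v0 p, walk R v0 p -> v0 \in Y -> last v0 p \notin M).

Lemma H1 {y m} : y \in Y -> m \in M -> connect R y m -> False.
Proof.
move=> yY mM /connectP [p pP mE]; subst m.
case: p pP mM => [|a p] pP mM.
  by move: dMY => /disjointFr; move/(_ y mM); rewrite yY.
by move: (nYM y (a::p)); rewrite /walk pP mM => /(_ isT yY).
Qed.

Lemma H2 {y m} : y \in Y -> m \in M -> connect R m y -> False.
Proof.
move=> yY mM /connectP [p pP yE]; subst y.
case: p pP yY => [|a p] pP yY.
  by move: dMY => /disjointFr; move/(_ m mM); rewrite yY.
by move: (nMY m (a::p)); rewrite /walk pP yY => /(_ isT mM).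
Qed.

Lemma H3 {x v m x'} : x \in X -> R x v -> v \in M -> connect R v m -> R m x' ->
  x' \in X -> False.
Proof.
move=> xX xv vM /connectP [q qP mE] mx' x'X.
have W : walk R x (v :: rcons q x').
  by rewrite /walk /= xv rcons_path qP -mE mx'.
have := cX x (v :: rcons q x') W xX; rewrite /= last_rcons => /(_ x'X) /and3P [_ vX _].
by move: dXM => /disjointFr; move/(_ v vX); rewrite vM.
Qed.

Definition Q a b :=
  (exists m x, [/\ connect R a m, m \in M, x \in X, R m x & connect R (beta x) b])
  \/ (exists x m, [/\ connect R a (beta x), x \in X, R x m, m \in M & connect R m b])
  \/ (exists m x x' m', [/\ connect R a m, m \in M, x \in X, R m x &
        [/\ R x' m', x' \in X, m' \in M & connect R m' b]]).

Lemma pathR a p : path (noloops R) a p -> connect R a (last a p).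
Proof.
elim: p a => [|v p IH] a /=; first by move=> _; exact: connect0.
case/andP => /andP [_ av] /IH; exact: connect_trans (connect1 av).
Qed.

Lemma main p : forall a, path (noloops (rearr R X M beta)) a p -> p != [::] ->
  path (noloops R) a p \/ Q a (last a p).
Proof.
elim: p => [|v p IH] a //= /andP [/andP [av arc] pP] _.
have arcs : (R a v && ~~ (((a \in M) && (v \in X)) || ((a \in X) && (v \in M))))
    \/ ((a \in M) && [exists x, (x \in X) && R a x && (v == beta x)])
    \/ ((v \in M) && [exists x, (x \in X) && R x v && (a == beta x)]).
  by move: arc; rewrite /rearr => /orP [/orP [->|->]|->]; auto.
have [P|QQ] : path (noloops R) v p \/ Q v (last v p).
- case: p IH pP => [|w p] IH pP; first by left.
  exact: IH.
- case: arcs => [/andP [avR _]|[/andP [aM /existsP [x /andP [/andP [xX ax] /eqP vE]]]|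
                   /andP [vM /existsP [x /andP [/andP [xX xv] /eqP aE]]]]].
  + by left; rewrite /= /noloops av avR P.
  + subst v; right; left; exists a, x; split => //; try exact: connect0.
    exact: pathR.
  + subst a; right; right; left; exists x, v; split => //; try exact: connect0.
    exact: pathR.
- case: arcs => [/andP [avR _]|[/andP [aM /existsP [x /andP [/andP [xX ax] /eqP vE]]]|
                   /andP [vM /existsP [x /andP [/andP [xX xv] /eqP aE]]]]].
  + right; case: QQ => [[m [x [c1 c2 c3 c4 c5]]]|[[x [m [c1 c2 c3 c4 c5]]]|
        [m [x [x' [m' [c1 c2 c3 c4 [c5 c6 c7 c8]]]]]]]].
    * left; exists m, x; split => //; exact: connect_trans (connect1 avR) c1.
    * right; left; exists x, m; split => //; exact: connect_trans (connect1 avR) c1.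
    * right; right; exists m, x, x', m'; split => //; exact: connect_trans (connect1 avR) c1.
  + subst v; case: QQ => [[m [x0 [c1 c2 c3 c4 c5]]]|[[x0 [m [c1 c2 c3 c4 c5]]]|
        [m [x0 [x' [m' [c1 c2 c3 c4 [c5 c6 c7 c8]]]]]]]].
    * by exfalso; apply: (H1 (hb _ xX) c2 c1).
    * right; right; right; exists a, x, x0, m; split => //; exact: connect0.
    * by exfalso; apply: (H1 (hb _ xX) c2 c1).
  + subst a; case: QQ => [[m [x0 [c1 c2 c3 c4 c5]]]|[[x0 [m [c1 c2 c3 c4 c5]]]|
        [m [x0 [x' [m' [c1 c2 c3 c4 [c5 c6 c7 c8]]]]]]]].
    * by exfalso; apply: (H3 xX xv vM c1 c4 c3).
    * by exfalso; apply: (H2 (hb _ c2) vM c1).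
    * by exfalso; apply: (H3 xX xv vM c1 c4 c3).
Qed.
End L.

Theorem lemma7 (T : finType) (R : rel T) (X M Y : {set T}) (beta : T -> T) :
  [disjoint X & M] ->
  [disjoint M & Y] ->
  (forall y, y \in Y -> [disjoint M & nbhd R y]) ->
  (forall x, x \in X -> beta x \in Y) ->
  convex R X ->
  (forall v0 p, walk R v0 p -> v0 \in M -> last v0 p \notin Y) ->
  (forall v0 p, walk R v0 p -> v0 \in Y -> last v0 p \notin M) ->
  in_Ta R -> in_Ta (rearr R X M beta).
Proof.
move=> dXM dMY _ hb cX nMY nYM ta v0 p; apply/negP.
case/andP => /andP [pn pP] /eqP lE.
case: (main _ _ _ _ _ _ dXM dMY hb cX nMY nYM _ _ pP pn) => [P|].
  by move: (ta v0 p); rewrite /closed_walk /walk pn P lE eqxx.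
rewrite lE => [[[m [x [c1 c2 c3 c4 c5]]]|[[x [m [c1 c2 c3 c4 c5]]]|
        [m [x [x' [m' [c1 c2 c3 c4 [c5 c6 c7 c8]]]]]]]]].
- exact: (H1 _ _ _ _ dMY nYM (hb _ c3) c2 (connect_trans c5 c1)).
- exact: (H2 _ _ _ _ dMY nMY (hb _ c2) c4 (connect_trans c5 c1)).
- exact: (H3 _ _ _ _ dXM cX c6 c5 c7 (connect_trans c8 c1) c4 c3).
Qed.
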